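(* Let $X$ be a compact space and let $E$ be an equivalence relation on $X$. If $E$ has an equivalence class which is not closed, then $E$ does not have any closed graphing of finite diameter.
   Context: A graphing of $E$ is a simple undirected graph $G\subseteq X\times X$ whose connectedness relation (connected by a finite path) equals $E$; it is closed if $G$ is closed in $X\times X$. $G$ has finite diameter $k$ if $k$ is the least integer such that any two $G$-connected points are joined by a path of length at most $k$. Spaces are recursive Polish spaces. *)

(* Defs.v *)
From HB Require Import structures.
From mathcomp Require Import all_boot all_order all_algebra.
From mathcomp Require Import all_classical all_reals topology normedtype.
Set Implicit Arguments. Unset Strict Implicit. Unset Printing Implicit Defensive.
Import Order.TTheory GRing.Theory Num.Theory.
Local Open Scope classical_set_scope.

Definition simple_graph (T : Type) (G : set (T * T)) : Prop :=
  (forall x y, G (x, y) -> G (y, x)) /\ (forall x, ~ G (x, x)).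

Fixpoint gpath (T : Type) (G : set (T * T)) (n : nat) (x y : T) : Prop :=
  match n with
  | 0 => x = y
  | n'.+1 => exists z, G (x, z) /\ gpath G n' z y
  end.

Definition gconnected (T : Type) (G : set (T * T)) (x y : T) : Prop :=
  exists n, gpath G n x y.

Definition graphing (T : Type) (E : T -> T -> Prop) (G : set (T * T)) : Prop :=
  simple_graph G /\ (forall x y, gconnected G x y <-> E x y).

Definition diameter_bound (T : Type) (G : set (T * T)) (k : nat) : Prop :=
  forall x y, gconnected G x y -> exists n, (n <= k)%N /\ gpath G n x y.

Definition has_diameter (T : Type) (G : set (T * T)) (k : nat) : Prop :=
  diameter_bound G k /\ (forall j, diameter_bound G j -> (k <= j)%N).

Definition finite_diameter (T : Type) (G : set (T * T)) : Prop :=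
  exists k, has_diameter G k.

Definition equiv_relation (T : Type) (E : T -> T -> Prop) : Prop :=
  (forall x, E x x) /\ (forall x y, E x y -> E y x) /\
  (forall x y z, E x y -> E y z -> E x z).

(* Main.v *)
Require Import Defs.
From HB Require Import structures.
From mathcomp Require Import all_boot all_order all_algebra.
From mathcomp Require Import all_classical all_reals topology normedtype.
Local Open Scope classical_set_scope.

Theorem theorem3p5 (R : realType) (X : pseudoMetricType R)
  (HX : hausdorff_space X) (Hc : compact [set: X])
  (E : X -> X -> Prop) (HE : equiv_relation E) :
  (exists x : X, ~ closed [set y | E x y]) ->
  ~ (exists G : set (X * X), graphing E G /\ closed G /\ finite_diameter G).
Proof.
move=> [x0 Hncl] [G [[_ HGE] [HG [k [Hk _]]]]].
apply: Hncl.
have HQ : forall n, closed [set y | gpath G n y x0].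
  elim=> [|n IH].
    exact: (accessible_closed_set1 (hausdorff_accessible HX)).
  have -> : [set y | gpath G n.+1 y x0] =
      fst @` (G `&` (snd @^-1` [set y | gpath G n y x0])).
    apply/seteqP; split.
      move=> y /= [z [Gyz Pz]]; exists (y, z) => //.
    by move=> y [[a b] [Gab Pb]] <- /=; exists b.
  apply: (compact_closed HX).
  apply: continuous_compact.
    apply: continuous_subspaceT => p; exact: cvg_fst.
  apply: (subclosed_compact _ (compact_setX Hc Hc)).
    apply: closedI => //; apply: preimage_closed => //.
    move=> p _; exact: cvg_snd.
  by move=> p _.
have HZ : forall m, closed [set y | exists n, (n <= m)%N /\ gpath G n y x0].
  elim=> [|m IH].
    have -> : [set y | exists n, (n <= 0)%N /\ gpath G n y x0] =
        [set y | gpath G 0 y x0].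
      apply/seteqP; split; first by move=> y [[|n] [Hn Hp]].
      by move=> y Hy; exists 0%N.
    exact: HQ.
  have -> : [set y | exists n, (n <= m.+1)%N /\ gpath G n y x0] =
      [set y | exists n, (n <= m)%N /\ gpath G n y x0] `|`
      [set y | gpath G m.+1 y x0].
    apply/seteqP; split.
      move=> y [n [Hn Hp]].
      rewrite leq_eqVlt in Hn; case/orP: Hn => [/eqP Hnm|Hn]; first by right; rewrite -Hnm.
      by left; exists n.
    move=> y [[n [Hn Hp]]|Hp]; last by exists m.+1.
    by exists n; split => //; apply: leq_trans Hn _.
  exact: closedU.
have -> : [set y | E x0 y] = [set y | exists n, (n <= k)%N /\ gpath G n y x0].
  case: HE => _ [Hsym _].
  apply/seteqP; split.
    move=> y /= /Hsym /HGE Hc'; exact: Hk.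
  move=> y /= [n [_ Hp]]; apply: Hsym; apply/HGE; by exists n.
exact: HZ.
Qed.
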